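(* Let $m,k\in\mathbb{N}$ with $m\leq 2^k$. Then the matrix ring $\mathbb{M}_m(\mathbb{F}_2)$ is $n$-torsion clean for some natural number $n\leq 2^k$.
   Context: $\mathbb{F}_2$ is the field with two elements and $\mathbb{M}_m(\mathbb{F}_2)$ the ring of $m\times m$ matrices over it. A ring $R$ is $n$-torsion clean if every $r\in R$ can be written $r=e+u$ with $e^2=e$, $u$ a unit, $u^n=1$, and $n$ is the smallest natural number with this property. *)

(* Defs.v *)
From HB Require Import structures.
From mathcomp Require Import all_boot all_order all_algebra.
Set Implicit Arguments. Unset Strict Implicit. Unset Printing Implicit Defensive.
Import GRing.Theory.
Local Open Scope ring_scope.

Definition mx_torsion_clean_with (m n : nat) : Prop :=
  forall A : 'M['F_2]_m,
    exists E U : 'M['F_2]_m,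
      [/\ E *m E = E, U \in unitmx, U ^+ n = 1 & A = E + U].

(* M_m(F_2) is n-torsion clean: n is the least natural number >= 1 with the
   property above (n = 0 is excluded since u^0 = 1 is vacuous). *)
Definition mx_n_torsion_clean (m n : nat) : Prop :=
  [/\ (0 < n)%N, mx_torsion_clean_with m n &
      forall k : nat, (0 < k)%N -> (k < n)%N -> ~ mx_torsion_clean_with m k].

(* Main.v *)
Require Import Defs.
From mathcomp Require Import all_boot all_order all_algebra.
From Stdlib Require Import Classical.
From mathcomp Require Import zify.
Set Implicit Arguments. Unset Strict Implicit. Unset Printing Implicit Defensive.
Import GRing.Theory.

Section Aux.
Local Open Scope ring_scope.

Lemma F2cases (x : 'F_2) : x = 0 \/ x = 1.
Proof. case: x => [[|[|//]]] i; [left|right]; exact: val_inj. Qed.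

Lemma addF2xx (x : 'F_2) : x + x = 0.
Proof. by case: (F2cases x) => ->; apply/eqP. Qed.

Lemma addmxx m n (A : 'M['F_2]_(m, n)) : A + A = 0.
Proof. by apply/matrixP => i j; rewrite !mxE addF2xx. Qed.

Lemma oppmxF2 m n (A : 'M['F_2]_(m, n)) : - A = A.
Proof. by apply/matrixP => i j; rewrite !mxE; case: (F2cases (A i j)) => ->; apply/eqP. Qed.

Definition nilclean n (A : 'M['F_2]_n) :=
  exists E : 'M_n, E *m E = E /\ (A - E) ^+ n = 0.

Lemma conj_expr n (P X : 'M['F_2]_n) k : P \in unitmx ->
  (invmx P *m X *m P) ^+ k = invmx P *m X ^+ k *m P.
Proof.
move=> uP; elim: k => [|k IH].
  by rewrite !expr0 mulmx1 mulVmx.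
rewrite !exprS IH -!mulmxE !mulmxA; congr (_ *m _).
by rewrite -!mulmxA (mulmxA P) mulmxV // mul1mx.
Qed.

Lemma nilclean_conj n (A P : 'M['F_2]_n) : P \in unitmx ->
  nilclean (P *m A *m invmx P) -> nilclean A.
Proof.
move=> uP [E [EE NE]]; exists (invmx P *m E *m P); split.
  by rewrite -!mulmxA (mulmxA P) mulmxV // mul1mx !mulmxA -(mulmxA _ E E) EE.
have -> : A - invmx P *m E *m P = invmx P *m (P *m A *m invmx P - E) *m P.
  rewrite mulmxBr mulmxBl; congr (_ - _).
  by rewrite !mulmxA mulVmx // mul1mx -mulmxA mulVmx // mulmx1.
by rewrite conj_expr // NE mulmx0 mul0mx.
Qed.

Lemma nilclean_cast n1 n2 (e : n1 = n2) (A : 'M['F_2]_n1) :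
  nilclean (castmx (e, e) A) -> nilclean A.
Proof. by case: n2 / e; rewrite castmx_id. Qed.

Lemma block_expr r s (X : 'M['F_2]_r) (Y : 'M['F_2]_(s, r)) (Z : 'M_s) k :
  exists W, (block_mx X 0 Y Z) ^+ k = block_mx (X ^+ k) 0 W (Z ^+ k).
Proof.
elim: k => [|k [W IH]].
  by exists 0; rewrite !expr0 -scalar_mx_block.
exists (Y *m X ^+ k + Z *m W).
rewrite !exprS IH -!mulmxE mulmx_block !mul0mx !mulmx0 !addr0 add0r.
done.
Qed.

Lemma nilclean_block r s (A1 : 'M['F_2]_r) (A21 : 'M_(s, r)) (A2 : 'M_s) :
  nilclean A1 -> nilclean A2 -> nilclean (block_mx A1 0 A21 A2).
Proof.
move=> [E1 [E1E N1]] [E2 [E2E N2]]; exists (block_mx E1 0 0 E2); split.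
  by rewrite mulmx_block !mul0mx !mulmx0 !addr0 add0r E1E E2E.
rewrite opp_block_mx add_block_mx oppr0 !addr0 ?subr0.
set N := block_mx _ _ _ _.
suff H : forall k, k = (s + r)%N -> N ^+ k = 0 by apply: H; rewrite addnC.
move=> k ->; rewrite exprD /N.
have [W1 ->] := block_expr (A1 - E1) A21 (A2 - E2) s.
have [W2 ->] := block_expr (A1 - E1) A21 (A2 - E2) r.
rewrite N1 N2 -mulmxE mulmx_block !mul0mx !mulmx0 !addr0.
by rewrite block_mx0.
Qed.

Lemma nilclean_stable_core r s (A Q : 'M['F_2]_(r + s)) : Q \in unitmx ->
  ((pid_mx r : 'M_(r, r + s)) *m Q *m A <= (pid_mx r : 'M_(r, r + s)) *m Q)%MS ->
  (forall B : 'M_r, nilclean B) -> (forall B : 'M_s, nilclean B) -> nilclean A.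
Proof.
move=> uQ st IHr IHs; apply: (nilclean_conj uQ).
set B := Q *m A *m invmx Q.
have [D HD] := submxP st.
have HB : (pid_mx r : 'M_(r, r + s)) *m B = row_mx D 0.
  rewrite /B !mulmxA HD -!mulmxA mulmxV // mulmx1 pid_mx_row.
  by rewrite mul_mx_row mulmx1 mulmx0.
have Hu : usubmx B = row_mx D 0.
  by rewrite -HB pid_mx_row -[B in RHS]vsubmxK mul_row_col mul1mx mul0mx addr0.
have Hur : ursubmx B = 0 by rewrite /ursubmx Hu row_mxKr.
by rewrite -[B]submxK Hur; apply: nilclean_block.
Qed.

Lemma nilclean_stable n (A U : 'M['F_2]_n) : (U *m A <= U)%MS ->
  (0 < \rank U)%N -> (\rank U < n)%N ->
  (forall k, (k < n)%N -> forall B : 'M_k, nilclean B) -> nilclean A.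
Proof.
move=> st r0 rn IH.
have IHr := IH _ rn.
have sn : (n - \rank U < n)%N by rewrite ltn_subrL r0 (leq_ltn_trans _ rn).
have IHs := IH _ sn.
have st' : ((pid_mx (\rank U) : 'M_(\rank U, n)) *m row_ebase U *m A <= (pid_mx (\rank U) : 'M_(\rank U, n)) *m row_ebase U)%MS.
  rewrite -[pid_mx _ *m _]/(row_base U).
  by rewrite (eqmxMr A (eq_row_base U)) (eq_row_base U).
move: (row_ebase_unit U) st' IHr IHs; move: (row_ebase U) => Q.
move: (\rank U) rn => r rn uQ st' IHr IHs.
move: (n - r)%N (subnKC (ltnW rn)) IHs => s e IHs.
clear IH st sn U r0; subst n.
exact: (nilclean_stable_core uQ).
Qed.

Definition shiftmx n : 'M['F_2]_n := \matrix_(i, j) ((j : nat) == i.+1)%:R.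

Lemma sut_nil n (M : 'M['F_2]_n) :
  (forall i j : 'I_n, (j <= i)%N -> M i j = 0) -> M ^+ n = 0.
Proof.
move=> HM.
have H : forall k (i j : 'I_n), (j < i + k)%N -> (M ^+ k) i j = 0.
  elim=> [|k IH] i j hij.
    rewrite expr0 !mxE; case: eqP => // eij.
    by move: hij; rewrite eij addn0 ltnn.
  rewrite exprSr -mulmxE !mxE big1 // => l _.
  case: (ltnP l (i + k)) => hl; first by rewrite IH // mul0r.
  by rewrite HM ?mulr0 // -ltnS (leq_trans hij) // addnS ltnS.
apply/matrixP => i j; by rewrite mxE H // (leq_trans (ltn_ord j)) // leq_addl.
Qed.

Lemma shift_nil n : shiftmx n ^+ n = 0.
Proof. by apply: sut_nil => i j hij; rewrite mxE; case: eqP => // e; move: hij; rewrite e ltnn. Qed.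

Lemma shift_mul n (X : 'M['F_2]_n) (i j : 'I_n) :
  (shiftmx n *m X) i j = if (i.+1 < n)%N then X (insubd i i.+1) j else 0.
Proof.
rewrite mxE; case: ifP => hi.
  rewrite (bigD1 (insubd i i.+1)) //= big1 ?addr0.
    by rewrite mxE val_insubd hi eqxx mul1r.
  move=> k hk; rewrite mxE; case: eqP; rewrite ?mul0r // => ek.
  by move: hk; rewrite -val_eqE /= val_insubd hi ek eqxx.
rewrite big1 // => k _; rewrite mxE; case: eqP; rewrite ?mul0r // => ek.
by move: hi; rewrite -ek ltn_ord.
Qed.

Lemma chain_nil n (N W : 'M['F_2]_n) : W \in unitmx ->
  W *m N = shiftmx n *m W -> N ^+ n = 0.
Proof.
move=> uW HW.
have H : forall k, W *m N ^+ k = shiftmx n ^+ k *m W.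
  elim=> [|k IH]; first by rewrite !expr0 mulmx1 mul1mx.
  by rewrite !exprSr -!mulmxE mulmxA IH -mulmxA HW mulmxA.
by rewrite -[N ^+ n]mul1mx -(mulVmx uW) -mulmxA H shift_nil mul0mx mulmx0.
Qed.

Lemma sum_one n (F : 'I_n -> 'F_2) a :
  (forall k, k != a -> F k = 0) -> \sum_k F k = F a.
Proof. by move=> H; rewrite (bigD1 a) //= big1 ?addr0 // => k /H. Qed.

Lemma sum_three n (F : 'I_n -> 'F_2) a b d :
  a != b -> a != d -> b != d ->
  (forall k, k != a -> k != b -> k != d -> F k = 0) ->
  \sum_k F k = F a + F b + F d.
Proof.
move=> ab ad bd H; rewrite (bigD1 a) //= (bigD1 b) /=; last by rewrite eq_sym ab.
rewrite (bigD1 d) /=; last by rewrite eq_sym ad eq_sym bd.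
rewrite big1 ?addr0 ?addrA // => k /andP [/andP [ka kb] kd]; exact: H.
Qed.

Definition compmx n (c : 'rV['F_2]_n) : 'M_n :=
  \matrix_(i, j) (if (i.+1 < n)%N then ((j : nat) == i.+1)%:R else c 0 j).

Lemma comp_last n (c : 'rV['F_2]_n.+1) : c 0 ord_max = 1 -> nilclean (compmx c).
Proof.
move=> hc; exists (compmx c - shiftmx n.+1); split; last first.
  by rewrite opprB addrC subrK shift_nil.
have HE : compmx c - shiftmx n.+1 =
    \matrix_(i, j) (if (i.+1 < n.+1)%N then 0 else c 0 j).
  apply/matrixP => i j; rewrite !mxE; case: ifP => hi; first by rewrite subrr.
  move/negbT: hi; rewrite -leqNgt => hi.
  by rewrite (ltn_eqF (leq_trans (ltn_ord j) hi)) subr0.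
rewrite HE; apply/matrixP => i j; rewrite !mxE (sum_one (a := ord_max)).
  rewrite !mxE ltnn hc; case: ifP => _; by rewrite ?mul0r ?mul1r.
move=> k hk; rewrite !mxE.
have -> : (k.+1 < n.+1)%N.
  by rewrite ltnS ltn_neqAle -ltnS ltn_ord andbT; rewrite -val_eqE /= in hk.
by rewrite mulr0.
Qed.

Lemma comp_zero n : nilclean (compmx (0 : 'rV['F_2]_n)).
Proof.
exists 0; split; first by rewrite mulmx0.
rewrite subr0; apply: sut_nil => i j hij; rewrite !mxE.
case: ifP => _ //; case: eqP => // e.
by move: hij; rewrite e ltnn.
Qed.

Lemma comp_two (c : 'rV['F_2]_2) : (forall j : 'I_2, c 0 j = ((j : nat) == 0)%:R) ->
  nilclean (compmx c).
Proof.
move=> hc; exists 1; split; first by rewrite mulmx1.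
rewrite expr2 -mulmxE; apply/matrixP => i j.
rewrite !mxE !big_ord_recl big_ord0 !mxE !hc.
by case: i => [[|[|//]]] ?; case: j => [[|[|//]]] ?; apply/eqP.
Qed.

Lemma comp_chain m (c : 'rV['F_2]_m.+3) : c 0 ord_max = 0 -> nilclean (compmx c).
Proof.
move=> hc.
pose c1 := c 0 (inord m.+1).
pose dl (j : 'I_m.+3) (k : nat) : 'F_2 := ((j : nat) == k)%:R.
pose N := \matrix_(i, j) (if (i < m.+1)%N then dl j i.+1
    else if (i == m.+1 :> nat) then dl j m.+2 + dl j m.+1 + (1 + c1) * dl j m
    else dl j m.+2 + c1 * dl j m.+1 + (1 + c1) * dl j m) : 'M['F_2]_m.+3.
pose W := \matrix_(i, j) (if (i == m.+2 :> nat) then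
    dl j m.+2 + dl j m.+1 + (1 + c1) * dl j m else ((i : nat) == j)%:R) : 'M['F_2]_m.+3.
pose i0 := (inord m : 'I_m.+3).
pose i1 := (inord m.+1 : 'I_m.+3).
pose i2 := (inord m.+2 : 'I_m.+3).
have v0 : (i0 : nat) = m by rewrite inordK // ltnS leqW.
have v1 : (i1 : nat) = m.+1 by rewrite inordK.
have v2 : (i2 : nat) = m.+2 by rewrite inordK.
have e01 : (m == m.+1) = false by apply/eqP; lia.
have e02 : (m == m.+2) = false by apply/eqP; lia.
have e10 : (m.+1 == m) = false by apply/eqP; lia.
have e12 : (m.+1 == m.+2) = false by apply/eqP; lia.
have e20 : (m.+2 == m) = false by apply/eqP; lia.
have e21 : (m.+2 == m.+1) = false by apply/eqP; lia.
have d01 : i0 != i1 by rewrite -val_eqE /= v0 v1 e01.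
have d02 : i0 != i2 by rewrite -val_eqE /= v0 v2 e02.
have d12 : i1 != i2 by rewrite -val_eqE /= v1 v2 e12.
have hc2 : c 0 i2 = 0.
  by rewrite -hc; congr (c 0 _); apply: val_inj; rewrite /= v2.
have other : forall k : 'I_m.+3, k != i0 -> k != i1 -> k != i2 -> (k < m)%N.
  move=> k; rewrite -!val_eqE /= v0 v1 v2 => k0 k1 k2.
  have := ltn_ord k; lia.
pose E := compmx c - N.
have HE : forall i j, E i j = if (i < m.+1)%N then 0
    else if (i == m.+1 :> nat) then dl j m.+1 + (1 + c1) * dl j m
    else c 0 j + dl j m.+2 + c1 * dl j m.+1 + (1 + c1) * dl j m.
  move=> i j; rewrite /E !mxE.
  have [hi|hi] := ltnP i m.+1.
    by rewrite (_ : (i.+1 < m.+3)%N) ?subrr //; lia.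
  case: (eqVneq (i : nat) m.+1) => hi1.
    rewrite hi1 ltnSn /dl.
    case: ((j : nat) == m.+2); case: ((j : nat) == m.+1); case: ((j : nat) == m);
    by case: (F2cases c1) => ->; apply/eqP.
  rewrite (_ : (i.+1 < m.+3)%N = false); last by have := ltn_ord i; lia.
  rewrite /dl.
  case: ((j : nat) == m.+2); case: ((j : nat) == m.+1); case: ((j : nat) == m);
  by case: (F2cases c1) => ->; case: (F2cases (c 0 j)) => ->; apply/eqP.
have Ezero : forall k j : 'I_m.+3, (k < m.+1)%N -> E k j = 0.
  by move=> k j hk; rewrite HE hk.
have EE : E *m E = E.
  apply/matrixP => i j; rewrite mxE (sum_three (a := i0) (b := i1) (d := i2)) //;
    last first.
    by move=> k k0 k1 k2; rewrite (Ezero k j) ?mulr0 //; exact: ltnW (other k k0 k1 k2).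
  rewrite !HE v0 v1 v2 ltnSn ltnn eqxx (_ : (m.+2 < m.+1)%N = false) ?e21 //;
    last by lia.
  rewrite mulr0 add0r /dl ?v1 ?v2 ?eqxx ?e12 ?e21 ?e01 ?e02 ?e10 ?e20 ?hc2 /c1.
  have [hi|hi] := ltnP i m.+1; first by rewrite !mul0r addr0.
  case: (eqVneq (i : nat) m.+1) => hi1.
    idtac.
    case: ((j : nat) == m.+2); case: ((j : nat) == m.+1); case: ((j : nat) == m);
    by case: (F2cases (c 0 (inord m.+1))) => ->; apply/eqP.
  idtac.
  case: ((j : nat) == m.+2); case: ((j : nat) == m.+1); case: ((j : nat) == m);
  by case: (F2cases (c 0 (inord m.+1))) => ->; case: (F2cases (c 0 j)) => ->; apply/eqP.
have Wrow : forall i j : 'I_m.+3, (i : nat) != m.+2 -> W i j = ((i : nat) == j)%:R.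
  by move=> i j hi; rewrite mxE (negPf hi).
have W2 : forall k : 'I_m.+3, k != i0 -> k != i1 -> k != i2 -> W i2 k = 0.
  move=> k k0 k1 k2; rewrite mxE v2 eqxx /dl.
  move: k0 k1 k2; rewrite -!val_eqE /= v0 v1 v2 => /negPf -> /negPf -> /negPf ->.
  by rewrite mulr0 !addr0.
have Wi2 : forall i : 'I_m.+3, (i : nat) = m.+2 -> i = i2.
  by move=> i hi; apply: val_inj; rewrite /= v2.
have WN : W *m N = shiftmx m.+3 *m W.
  apply/matrixP => i j; rewrite shift_mul.
  case: (eqVneq (i : nat) m.+2) => hi2.
    rewrite (_ : (i.+1 < m.+3)%N = false); last by rewrite hi2 ltnn.
    rewrite (Wi2 _ hi2) mxE (sum_three (a := i0) (b := i1) (d := i2)) //; last first.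
      by move=> k k0 k1 k2; rewrite W2 ?mul0r.
    have l21 : (m.+2 < m.+1)%N = false by lia.
    rewrite !mxE /dl !v0 !v1 !v2 ltnSn ltnn l21 ?eqxx ?e12 ?e21 ?e01 ?e02 ?e10 ?e20 /c1.
    case: ((j : nat) == m.+2); case: ((j : nat) == m.+1); case: ((j : nat) == m);
    by case: (F2cases (c 0 (inord m.+1))) => ->; apply/eqP.
  have hi : (i.+1 < m.+3)%N by have := ltn_ord i; lia.
  rewrite hi mxE (sum_one (a := i)); last first.
    by move=> k hk; rewrite Wrow // eq_sym (negPf (hk : (k : nat) != i)) mul0r.
  rewrite (Wrow i i) // eqxx mul1r !mxE val_insubd hi.
  case: (eqVneq (i : nat) m.+1) => hi1.
    by rewrite hi1 ltnn !eqxx.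
  have hi' : (i < m.+1)%N by have := ltn_ord i; lia.
  have hi'' : (i.+1 == m.+2) = false by apply/eqP; lia.
  by rewrite hi' hi'' /dl eq_sym.
have WW : W *m W = 1%:M.
  apply/matrixP => i j.
  case: (eqVneq (i : nat) m.+2) => hi2.
    rewrite (Wi2 _ hi2) mxE (sum_three (a := i0) (b := i1) (d := i2)) //; last first.
      by move=> k k0 k1 k2; rewrite W2 ?mul0r.
    rewrite !mxE /dl !v0 !v1 !v2 ?eqxx ?e12 ?e21 ?e01 ?e02 ?e10 ?e20 /c1.
    rewrite -(inj_eq val_inj) /= v2 ![m == _]eq_sym ![m.+1 == _]eq_sym ![m.+2 == _]eq_sym.
    case: ((j : nat) == m.+2); case: ((j : nat) == m.+1); case: ((j : nat) == m);
    by case: (F2cases (c 0 (inord m.+1))) => ->; apply/eqP.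
  rewrite mxE (sum_one (a := i)); last first.
    by move=> k hk; rewrite Wrow // eq_sym (negPf (hk : (k : nat) != i)) mul0r.
  by rewrite Wrow // eqxx mul1r Wrow // !mxE.
exists E; split => //.
have -> : compmx c - E = N by rewrite /E opprB addrC subrK.
apply: (chain_nil (W := W)) => //.
by case: (mulmx1_unit WW).
Qed.

Lemma comp_nilclean n (c : 'rV['F_2]_n) : nilclean (compmx c).
Proof.
case: n c => [|n] c.
  have -> : c = 0 by apply/rowP => [[]].
  exact: comp_zero.
case: (F2cases (c 0 ord_max)) => hl; last exact: comp_last.
case: n c hl => [|[|m]] c hl.
- have -> : c = 0.
    apply/rowP => j; rewrite !mxE -hl; case: j => [[|//]] ?.
    by congr (c 0 _); apply: val_inj.
  exact: comp_zero.
- case: (F2cases (c 0 ord0)) => h0.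
    have -> : c = 0.
      apply/rowP => j; rewrite mxE; case: j => [[|[|//]]] ?.
        by rewrite -h0; congr (c 0 _); apply: val_inj.
      by rewrite -hl; congr (c 0 _); apply: val_inj.
    exact: comp_zero.
  apply: comp_two => j; case: j => [[|[|//]]] ?.
    by transitivity (c 0 ord0); [congr (c 0 _); apply: val_inj | rewrite h0].
  by transitivity (c 0 ord_max); [congr (c 0 _); apply: val_inj | rewrite hl].
- exact: comp_chain.
Qed.

Lemma krylov n (A : 'M['F_2]_n.+1) :
  exists c : 'rV_n.+1,
    (\matrix_(i < n.+1) (delta_mx 0 0 *m A ^+ i)) *m A =
    compmx c *m (\matrix_(i < n.+1) (delta_mx 0 0 *m A ^+ i)).
Proof.
set p := char_poly A.
have CH := Cayley_Hamilton A.
have Hp : p = \sum_(i < n.+2) p`_i *: 'X^i.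
  by rewrite -poly_def [X in \poly_(i < X) _](_ : n.+2 = size p) ?coefK // size_char_poly.
have HAn : A ^+ n.+1 = \sum_(i < n.+1) (- p`_i) *: A ^+ i.
  move: CH; rewrite -/p {1}Hp linear_sum big_ord_recr /=.
  have lc : p`_n.+1 = 1.
    by have := char_poly_monic A; rewrite monicE lead_coefE size_char_poly => /eqP.
  rewrite lc linearZ /= rmorphXn /= horner_mx_X scale1r => /eqP.
  rewrite addrC addr_eq0 => /eqP ->; rewrite -sumrN; apply: eq_bigr => i _.
  by rewrite linearZ /= rmorphXn /= horner_mx_X scaleNr.
exists (\row_j (- p`_j)).
set K := \matrix_(i < n.+1) _.
apply/row_matrixP => i; rewrite !row_mul rowK.
rewrite -mulmxA (_ : A ^+ i *m A = A ^+ i.+1); last by rewrite exprSr.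
case: (ltnP i.+1 n.+1) => hi.
  have -> : row i (compmx (\row_j (- p`_j))) = delta_mx 0 (insubd i i.+1).
    apply/rowP => k; rewrite !mxE hi eqxx /=.
    by rewrite -val_eqE /= val_insubd hi.
  by rewrite /K -[RHS]rowE rowK val_insubd hi.
have -> : row i (compmx (\row_j (- p`_j))) = \row_j (- p`_j).
  by apply/rowP => k; rewrite !mxE ltnNge hi.
have -> : i.+1 = n.+1 by have := ltn_ord i; lia.
rewrite HAn mulmx_sumr [RHS]mulmx_sum_row; apply: eq_bigr => j _.
by rewrite /K rowK mxE scalemxAr.
Qed.

Lemma nilclean_all n (A : 'M['F_2]_n) : nilclean A.
Proof.
elim/ltn_ind: n A => n IH A.
case: n IH A => [|n] IH A.
  exists 0; split; first by rewrite mulmx0.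
  by apply/matrixP => [[]].
have [c Hc] := krylov A.
set K := \matrix_(i < n.+1) _ in Hc.
case uK: (K \in unitmx).
  apply: (nilclean_conj uK).
  rewrite Hc -mulmxA mulmxV ?uK //.
  have -> : compmx c *m 1%:M = compmx c by apply: mulmx1.
  exact: comp_nilclean.
apply: (nilclean_stable (U := K)).
- by rewrite Hc submxMl.
- rewrite lt0n mxrank_eq0; apply/eqP => K0.
  have := congr1 (row ord0) K0.
  rewrite /K rowK row0 expr0 mulmx1 => /rowP /(_ ord0).
  by rewrite !mxE eqxx; move/eqP.
- rewrite ltn_neqAle rank_leq_row andbT; apply: contraFN uK => h.
  by rewrite -row_free_unit.
- by move=> k hk B; exact: IH.
Qed.

Lemma my_least (P : nat -> Prop) N : P N ->
  exists n, (n <= N)%N /\ P n /\ forall k, (k < n)%N -> ~ P k.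
Proof.
elim/ltn_ind: N => N IH HN.
case: (classic (exists k, (k < N)%N /\ P k)) => [[k [hk Pk]] | H].
  have [n [hn [Pn mn]]] := IH k hk Pk.
  by exists n; split => //; exact: leq_trans hn (ltnW hk).
exists N; split => //; split => // k hk Pk; apply: H; by exists k.
Qed.

Lemma unipotent_pow m (N : 'M['F_2]_m) j : (N + 1) ^+ (2 ^ j) = N ^+ (2 ^ j) + 1.
Proof.
elim: j => [|j IH]; first by rewrite !expn0 !expr1.
by rewrite expnS mulnC !exprM IH sqrrD1 mulr2n addmxx addr0.
Qed.

End Aux.

Theorem proposition1p6 (m k : nat) :
  (m <= 2 ^ k)%N -> exists n : nat, (n <= 2 ^ k)%N /\ mx_n_torsion_clean m n.
Proof.
move=> hm.
have HC : mx_torsion_clean_with m (2 ^ k).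
  move=> A; have [E [EE HN]] := nilclean_all (A + 1%R).
  exists E, (A - E)%R.
  have HU : ((A + 1 - E) + 1 = A - E)%R.
    apply/matrixP => i j; rewrite !mxE.
    by case: (F2cases (A i j)) => ->; case: (F2cases (E i j)) => ->; case: (i == j); apply/eqP.
  have Hpow : ((A - E) ^+ (2 ^ k) = 1)%R.
    rewrite -HU unipotent_pow (_ : (2 ^ k = m + (2 ^ k - m))%N); last by rewrite subnKC.
    by rewrite GRing.exprD HN GRing.mul0r GRing.add0r.
  split => //.
  - have H1 : ((A - E) *m (A - E) ^+ (2 ^ k).-1 = 1%:M)%R.
      rewrite -[X in (X *m _)%R]GRing.expr1 mulmxE -GRing.exprD add1n prednK ?expn_gt0 ?Hpow //.
    by case: (mulmx1_unit H1).
  - by rewrite addrC subrK.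
have [n [hn [[n0 Cn] mn]]] :=
  my_least (P := fun n => (0 < n)%N /\ mx_torsion_clean_with m n) (conj (expn_gt0 2 k) HC).
exists n; split => //; split => // j j0 jn Cj.
by apply: (mn j jn).
Qed.
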